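(* Let $\rho$ be any single-qubit density matrix and let $\Lambda$ be any incoherent operation (IO) on a qubit. Then there exists a strictly incoherent operation (SIO) $\Lambda'$ on a qubit with $\Lambda'(\rho)=\Lambda(\rho)$. Consequently, for every single-qubit state $\rho$, the set $\{\Lambda(\rho):\Lambda \text{ an IO}\}$ equals the set $\{\Lambda(\rho):\Lambda\text{ an SIO}\}$.
   Context: Fix the computational (incoherent) basis $\{|0\rangle,|1\rangle\}$ of $\mathbb{C}^2$; a state is incoherent if it is diagonal in this basis. An incoherent operation (IO) is a quantum channel with Kraus operators $\{K_n\}$, $\sum_n K_n^\dagger K_n=I$, such that $K_n\delta K_n^\dagger$ is diagonal for every diagonal $\delta$ (equivalently, each $K_n$ has at most one nonzero entry in every column). A strictly incoherent operation (SIO) is an IO whose Kraus operators additionally satisfy that $K_n^\dagger\delta K_n$ is diagonal for every diagonal $\delta$ (equivalently, each $K_n$ has at most one nonzero entry in every row and every column). *)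

(* Defs.v *)
(* Complex scalars: any numeric closed field R (e.g. algC). *)
From HB Require Import structures.
From mathcomp Require Import all_boot all_order all_algebra.
Set Implicit Arguments. Unset Strict Implicit. Unset Printing Implicit Defensive.
Import Order.TTheory GRing.Theory Num.Theory.
Local Open Scope ring_scope.

Definition dagger (R : numClosedFieldType) m n (A : 'M[R]_(m, n)) : 'M[R]_(n, m) :=
  (map_mx Num.conj A)^T.

Definition psd (R : numClosedFieldType) n (A : 'M[R]_n) : Prop :=
  dagger A = A /\ forall v : 'cV[R]_n, 0 <= (dagger v *m A *m v) 0 0.

Definition density (R : numClosedFieldType) n (rho : 'M[R]_n) : Prop :=
  psd rho /\ \tr rho = 1.

Definition kraus_apply (R : numClosedFieldType) n (Ks : seq 'M[R]_n) (rho : 'M[R]_n)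
  : 'M[R]_n := \sum_(K <- Ks) K *m rho *m dagger K.

Definition kraus_complete (R : numClosedFieldType) n (Ks : seq 'M[R]_n) : Prop :=
  \sum_(K <- Ks) dagger K *m K = 1%:M.

(* incoherent operation (computational basis = standard basis) *)
Definition IO_kraus (R : numClosedFieldType) n (Ks : seq 'M[R]_n) : Prop :=
  kraus_complete Ks /\
  forall K, K \in Ks -> forall d : 'M[R]_n, is_diag_mx d ->
    is_diag_mx (K *m d *m dagger K).

Definition SIO_kraus (R : numClosedFieldType) n (Ks : seq 'M[R]_n) : Prop :=
  IO_kraus Ks /\
  forall K, K \in Ks -> forall d : 'M[R]_n, is_diag_mx d ->
    is_diag_mx (dagger K *m d *m K).

(* Main.v *)
Require Import Defs.
From HB Require Import structures.
From mathcomp Require Import all_boot all_order all_algebra.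
From mathcomp Require Import ring.
Import Order.TTheory GRing.Theory Num.Theory.
Local Open Scope ring_scope.

Section Aux.
Variable R : numClosedFieldType.
Implicit Types (A K d rho : 'M[R]_2).

Lemma sum2 (F : 'I_2 -> R) : \sum_(i < 2) F i = F 0 + F 1.
Proof. rewrite big_ord_recl big_ord1; congr (_ + F _); exact: val_inj. Qed.

Lemma ord2P (i : 'I_2) : i = 0 \/ i = 1.
Proof. case: i => [[|[|n]] Hi]; [left|right|by []]; exact: val_inj. Qed.

Lemma diag2P A : is_diag_mx A <-> (A 0 1 = 0 /\ A 1 0 = 0).
Proof.
split.
  move/is_diag_mxP=> H; split; apply: H; by [].
move=> [H1 H2]; apply/is_diag_mxP => i j.
case: (ord2P i) => ->; case: (ord2P j) => -> //.
Qed.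

Lemma KdK K d i j : d 0 1 = 0 -> d 1 0 = 0 ->
  (K *m d *m dagger K) i j = K i 0 * d 0 0 * (K j 0)^* + K i 1 * d 1 1 * (K j 1)^*.
Proof.
by move=> h1 h2; rewrite !mxE !sum2 !mxE !sum2 h1 h2 ?mulr0 ?mul0r ?addr0 ?add0r.
Qed.

Lemma KdK' K d i j : d 0 1 = 0 -> d 1 0 = 0 ->
  (dagger K *m d *m K) i j = (K 0 i)^* * d 0 0 * K 0 j + (K 1 i)^* * d 1 1 * K 1 j.
Proof.
by move=> h1 h2; rewrite !mxE !sum2 !mxE !sum2 h1 h2 ?mulr0 ?mul0r ?addr0 ?add0r /dagger !mxE.
Qed.

Lemma KrK K rho i j : (K *m rho *m dagger K) i j =
  (K i 0 * rho 0 0 + K i 1 * rho 1 0) * (K j 0)^* + (K i 0 * rho 0 1 + K i 1 * rho 1 1) * (K j 1)^*.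
Proof. by rewrite !mxE !sum2 !mxE !sum2. Qed.

Definition colz K := (K 0 0 = 0 \/ K 1 0 = 0) /\ (K 0 1 = 0 \/ K 1 1 = 0).
Definition rowz K := (K 0 0 = 0 \/ K 0 1 = 0) /\ (K 1 0 = 0 \/ K 1 1 = 0).
Definition sioK K := (forall d, is_diag_mx d -> is_diag_mx (K *m d *m dagger K)) /\
  (forall d, is_diag_mx d -> is_diag_mx (dagger K *m d *m K)).

Lemma io_colz K : (forall d, is_diag_mx d -> is_diag_mx (K *m d *m dagger K)) -> colz K.
Proof.
move=> H.
have dg0 : is_diag_mx (delta_mx (0:'I_2) (0:'I_2) : 'M[R]_2) by apply/diag2P; rewrite !mxE.
have dg1 : is_diag_mx (delta_mx (1:'I_2) (1:'I_2) : 'M[R]_2) by apply/diag2P; rewrite !mxE.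
move/H/diag2P: dg0 => [h _]; move/H/diag2P: dg1 => [h' _].
rewrite KdK ?mxE // /= mulr1 mulr0 mul0r addr0 in h.
rewrite KdK ?mxE // /= mulr1 mulr0 mul0r add0r in h'.
split.
  by move/eqP: h; rewrite mulf_eq0 conjC_eq0 => /orP [] /eqP; [left|right].
by move/eqP: h'; rewrite mulf_eq0 conjC_eq0 => /orP [] /eqP; [left|right].
Qed.

Lemma sio_of K : colz K -> rowz K -> sioK K.
Proof.
move=> [c1 c2] [r1 r2]; split => d /diag2P [h1 h2]; apply/diag2P;
rewrite ?KdK ?KdK' //;
case: c1 => ->; case: c2 => ->; case: r1 => E1; rewrite ?E1; case: r2 => E2; rewrite ?E2;
rewrite ?conjC0 ?mulr0 ?mul0r ?addr0 ?add0r //.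
Qed.

Lemma mul0_or (x y : R) : x * y = 0 -> x = 0 \/ y = 0.
Proof. by move/eqP; rewrite mulf_eq0 => /orP [] /eqP; [left|right]. Qed.

Definition sio_b K := (K 0 0 * K 0 1 == 0) && (K 1 0 * K 1 1 == 0).
Definition PK K : 'M[R]_2 := if sio_b K then K else 0.

Lemma PK_sio K : colz K -> sioK (PK K).
Proof.
rewrite /PK; case: ifP => [/andP [/eqP h1 /eqP h2] c | _ _].
  apply: sio_of => //; by split; apply: mul0_or.
by apply: sio_of; split; rewrite !mxE; left.
Qed.

Lemma PK_rowz K : rowz (PK K).
Proof.
rewrite /PK; case: ifP => [/andP [/eqP h1 /eqP h2] | _].
  by split; apply: mul0_or.
by split; rewrite !mxE; left.
Qed.

Lemma PK_cmp_off K : (dagger (PK K) *m PK K) 0 1 = 0 /\ (dagger (PK K) *m PK K) 1 0 = 0.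
Proof.
have [r1 r2] := PK_rowz K.
rewrite -[dagger (PK K)](mulmx1) !KdK' ?mxE //=.
by split; case: r1 => ->; case: r2 => ->; rewrite ?conjC0 ?mulr0 ?mul0r ?addr0 ?add0r.
Qed.

Lemma PK_out_off K rho : colz K ->
  (K *m rho *m dagger K - PK K *m rho *m dagger (PK K)) 0 1 = 0 /\
  (K *m rho *m dagger K - PK K *m rho *m dagger (PK K)) 1 0 = 0.
Proof.
move=> [c1 c2]; rewrite /PK; case: ifP => [_|/negbT]; first by rewrite subrr !mxE.
rewrite /sio_b negb_and !mulf_eq0 !negb_or => /orP [] /andP [n1 n2].
  have z1 : K 1 0 = 0 by case: c1 => // h; rewrite h eqxx in n1.
  have z2 : K 1 1 = 0 by case: c2 => // h; rewrite h eqxx in n2.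
  by rewrite !mul0mx subr0; split; rewrite KrK z1 z2 ?(conjC0, mulr0, mul0r, addr0, add0r).
have z1 : K 0 0 = 0 by case: c1 => // h; rewrite h eqxx in n1.
have z2 : K 0 1 = 0 by case: c2 => // h; rewrite h eqxx in n2.
by rewrite !mul0mx subr0; split; rewrite KrK z1 z2 ?(conjC0, mulr0, mul0r, addr0, add0r).
Qed.


Lemma psd_quad rho : psd rho -> forall a b : R,
  0 <= (a^* * rho 0 0 + b^* * rho 1 0) * a + (a^* * rho 0 1 + b^* * rho 1 1) * b.
Proof.
move=> [_ H] a b; have := H (a *: delta_mx 0 0 + b *: delta_mx 1 0).
by rewrite !mxE !sum2 !mxE !sum2 /dagger !mxE /= ?(mulr1, mulr0, addr0, add0r).
Qed.

Lemma KrK_ge0 rho K i : psd rho -> 0 <= (K *m rho *m dagger K) i i.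
Proof. by move=> Hp; rewrite KrK; have := @psd_quad _ Hp (K i 0)^* (K i 1)^*; rewrite !conjCK. Qed.

Lemma rho_ge0 rho i : psd rho -> 0 <= rho i i.
Proof.
move=> Hp; case: (ord2P i) => ->.
  by have := @psd_quad _ Hp 1 0; rewrite ?(conjC0, conjC1, mulr0, mul0r, mulr1, mul1r, addr0, add0r).
by have := @psd_quad _ Hp 0 1; rewrite ?(conjC0, conjC1, mulr0, mul0r, mulr1, mul1r, addr0, add0r).
Qed.

Lemma cmp_ge0 K i : 0 <= (dagger K *m K) i i.
Proof.
rewrite -[dagger K]mulmx1 KdK' ?mxE //= !mulr1.
by apply: addr_ge0; rewrite mulrC mul_conjC_ge0.
Qed.

Lemma Ediff_ge0 rho K i : psd rho ->
  0 <= (K *m rho *m dagger K - PK K *m rho *m dagger (PK K)) i i.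
Proof.
move=> Hp; rewrite /PK; case: ifP => _; first by rewrite subrr mxE.
by rewrite !mul0mx subr0; apply: KrK_ge0.
Qed.

Lemma Ddiff_ge0 K i : 0 <= (dagger K *m K - dagger (PK K) *m PK K) i i.
Proof.
rewrite /PK; case: ifP => _; first by rewrite subrr mxE.
by rewrite mulmx0 subr0; apply: cmp_ge0.
Qed.

Lemma tr_KrK (M rho : 'M[R]_2) : \tr (M *m rho *m dagger M) = \tr (dagger M *m M *m rho).
Proof. by rewrite mxtrace_mulC !mulmxA. Qed.

Lemma tr_diff rho K : \tr (K *m rho *m dagger K - PK K *m rho *m dagger (PK K)) =
  \tr ((dagger K *m K - dagger (PK K) *m PK K) *m rho).
Proof. by rewrite mulmxBl !raddfB /= !tr_KrK. Qed.

Definition op (i j : 'I_2) (x : R) : 'M[R]_2 := x *: delta_mx i j.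

Lemma op_sio i j x : sioK (op i j x).
Proof.
apply: sio_of; case: (ord2P i) => ->; case: (ord2P j) => ->;
  rewrite /colz /rowz !mxE /= ?mulr0; split; (by left) || (by right).
Qed.

Lemma op_cmp i j x : dagger (op i j x) *m op i j x = (x^* * x) *: delta_mx j j.
Proof.
apply/matrixP => a b; rewrite -[dagger _]mulmx1 KdK' ?mxE //= ?mulr1.
case: (ord2P i) => ->; case: (ord2P j) => ->; case: (ord2P a) => ->; case: (ord2P b) => ->;
  rewrite ?mxE /= ?(conjC0, mulr0, mul0r, mulr1, mul1r, addr0, add0r) //.
Qed.

Lemma op_out i j x rho : op i j x *m rho *m dagger (op i j x) = (x * x^* * rho j j) *: delta_mx i i.
Proof.
apply/matrixP => a b; rewrite KrK.
case: (ord2P i) => ->; case: (ord2P j) => ->; case: (ord2P a) => ->; case: (ord2P b) => ->;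
  rewrite ?mxE /= ?(conjC0, mulr0, mul0r, mulr1, mul1r, addr0, add0r) //; ring.
Qed.

Lemma sqc (v : R) : 0 <= v -> sqrtC v * (sqrtC v)^* = v.
Proof. by move=> h; rewrite geC0_conj ?sqrtC_ge0 // -expr2 sqrtCK. Qed.
Lemma sqc' (v : R) : 0 <= v -> (sqrtC v)^* * sqrtC v = v.
Proof. by move=> h; rewrite mulrC sqc. Qed.


Lemma main1 rho Ks : psd rho -> IO_kraus Ks ->
  exists Ks', SIO_kraus Ks' /\ kraus_apply Ks' rho = kraus_apply Ks rho.
Proof.
move=> Hp [Hc Hio].
have colK K : K \in Ks -> colz K by move=> /Hio /io_colz.
pose E := \sum_(K <- Ks) (K *m rho *m dagger K - PK K *m rho *m dagger (PK K)).
pose D := \sum_(K <- Ks) (dagger K *m K - dagger (PK K) *m PK K).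
have EE : kraus_apply Ks rho = kraus_apply (map PK Ks) rho + E.
  by rewrite /kraus_apply big_map /E sumrB addrC subrK.
have DD : D = 1%:M - \sum_(K <- Ks) dagger (PK K) *m PK K.
  by rewrite /D sumrB -Hc.
have E01 : E 0 1 = 0.
  by rewrite summxE big1_seq // => K /andP [_ HK]; case: (PK_out_off K rho (colK K HK)).
have E10 : E 1 0 = 0.
  by rewrite summxE big1_seq // => K /andP [_ HK]; case: (PK_out_off K rho (colK K HK)).
have D01 : D 0 1 = 0.
  rewrite DD !mxE summxE big1_seq ?subr0 // => K _; by case: (PK_cmp_off K).
have D10 : D 1 0 = 0.
  rewrite DD !mxE summxE big1_seq ?subr0 // => K _; by case: (PK_cmp_off K).
have Eii i : 0 <= E i i by rewrite summxE; apply: sumr_ge0 => K _; apply: Ediff_ge0.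
have Dii i : 0 <= D i i by rewrite summxE; apply: sumr_ge0 => K _; apply: Ddiff_ge0.
have trE : E 0 0 + E 1 1 = D 0 0 * rho 0 0 + D 1 1 * rho 1 1.
  have : \tr E = \tr (D *m rho).
    rewrite /E /D mulmx_suml !raddf_sum; apply: eq_bigr => K _; exact: tr_diff.
  rewrite /mxtrace !sum2 !mxE !sum2 D01 D10 !mul0r addr0 add0r => ->.
  done.
pose S := E 0 0 + E 1 1.
pose c := E 0 0 / S.
have S0 : 0 <= S by apply: addr_ge0.
have c0 : 0 <= c by apply: divr_ge0.
have cS : c * S = E 0 0.
  have [/eqP HS|HS] := boolP (S == 0).
    rewrite HS mulr0; apply/eqP; rewrite eq_le Eii /=.
    by rewrite -HS /S lerDl.
  by rewrite /c divfK.
have c1 : 0 <= 1 - c.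
  rewrite subr_ge0; have [/eqP HS|HS] := boolP (S == 0).
    by rewrite /c HS invr0 mulr0 ler01.
  have Sp : 0 < S by rewrite lt_def HS S0.
  by rewrite /c ler_pdivrMr // mul1r /S lerDl.
pose ops := [:: op 0 0 (sqrtC (c * D 0 0)); op 1 0 (sqrtC ((1 - c) * D 0 0));
                op 0 1 (sqrtC (c * D 1 1)); op 1 1 (sqrtC ((1 - c) * D 1 1))].
have g1 : 0 <= c * D 0 0 by apply: mulr_ge0.
have g2 : 0 <= (1 - c) * D 0 0 by apply: mulr_ge0.
have g3 : 0 <= c * D 1 1 by apply: mulr_ge0.
have g4 : 0 <= (1 - c) * D 1 1 by apply: mulr_ge0.
have opsC : \sum_(K <- ops) dagger K *m K = D.
  rewrite !big_cons big_nil addr0 !op_cmp !sqc' //.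
  apply/matrixP => a b; rewrite !mxE.
  case: (ord2P a) => ->; case: (ord2P b) => ->; rewrite /= ?D01 ?D10 ?(mulr0, mulr1, addr0, add0r) //.
    by rewrite -mulrDl addrC subrK mul1r.
  by rewrite -mulrDl addrC subrK mul1r.
have opsO : kraus_apply ops rho = E.
  rewrite /kraus_apply !big_cons big_nil addr0 !op_out !sqc //.
  apply/matrixP => a b; rewrite !mxE.
  case: (ord2P a) => ->; case: (ord2P b) => ->; rewrite /= ?E01 ?E10 ?(mulr0, mulr1, addr0, add0r) //.
    by rewrite -cS /S trE; ring.
  have -> : E 1 1 = S - E 0 0 by rewrite /S; ring.
  by rewrite -cS /S trE; ring.
exists (map PK Ks ++ ops); split; last first.
  by rewrite EE -opsO /kraus_apply big_cat.
have allS K : K \in map PK Ks ++ ops -> sioK K.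
  rewrite mem_cat => /orP [/mapP [K0 HK0 ->]|]; first by apply: PK_sio; apply: colK.
  by rewrite !in_cons in_nil orbF => /or4P [] /eqP ->; apply: op_sio.
split; last by move=> K /allS [].
split; last by move=> K /allS [].
rewrite /kraus_complete big_cat /= opsC DD big_map.
by rewrite addrC subrK.
Qed.

End Aux.

Theorem theorem1 (R : numClosedFieldType) (rho : 'M[R]_2) :
  density rho ->
  (forall Ks : seq 'M[R]_2, IO_kraus Ks ->
     exists Ks' : seq 'M[R]_2, SIO_kraus Ks' /\ kraus_apply Ks' rho = kraus_apply Ks rho)
  /\
  (forall sigma : 'M[R]_2,
     (exists Ks : seq 'M[R]_2, IO_kraus Ks /\ kraus_apply Ks rho = sigma) <->
     (exists Ks : seq 'M[R]_2, SIO_kraus Ks /\ kraus_apply Ks rho = sigma)).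
Proof.
move=> [Hp _].
have H1 := fun Ks => @main1 R rho Ks Hp.
split => // sigma; split.
  move=> [Ks [HK <-]]; have [Ks' [HS E]] := H1 Ks HK; by exists Ks'.
by move=> [Ks [[HI _] <-]]; exists Ks.
Qed.
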